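(* Consider online binary classification with abstention with $d$ experts, and suppose the abstention costs satisfy $0\le c_t$ and $\max_t c_t<\frac12$. Then AdaHedge with abstention guarantees, for every expert $i\in\{1,\dots,d\}$, $$\sum_{t=1}^T\big((1-b_t)\ell_t(y_t^\star)+b_tc_t\big)\le\sum_{t=1}^T\ell_t(y_t^i)+\min\Big\{\frac{\ln d}{1-2\max_tc_t},\ 2\sqrt{\ln d\sum_{t=1}^Tv_t}\Big\}+\frac43\ln d+2,$$ where $v_t=\mathbb E_{i\sim\hat{\mathbf p}_t}\big[(\ell_t(\hat y_t)-\ell_t(y_t^i))^2\big]$.
   Context: Online classification with abstention: in each round $t=1,\dots,T$, the learner observes expert predictions $y_t^1,\dots,y_t^d\in[-1,1]$, predicts $y'_t\in[-1,1]\cup\{*\}$ ($*$ = abstain), the environment reveals $y_t\in\{-1,1\}$ and an abstention cost $c_t$, and the learner suffers $\ell_t(y'_t)=\frac12(1-y_ty'_t)$ if $y'_t\in[-1,1]$ and $c_t$ if $y'_t=*$. For expert $i$ its loss is $\ell_t(y_t^i)=\frac12(1-y_ty_t^i)\in[0,1]$. AdaHedge: with $L_{t,i}=\sum_{s<t}\ell_s(y_s^i)$, weights $\hat p_{t,i}\propto\exp(-\eta_tL_{t,i})$, where $\eta_t=\ln d/\Delta_{t-1}$ (and for $\Delta_{t-1}=0$ the weights are uniform over the experts minimizing $L_{t,i}$), $\Delta_t=\sum_{s\le t}\delta_s$, $\delta_s=h_s-m_s$, $h_s=\sum_i\hat p_{s,i}\ell_s(y_s^i)$, $m_s=-\frac1{\eta_s}\ln\sum_i\hat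 p_{s,i}e^{-\eta_s\ell_s(y_s^i)}$ (with $m_s=\min_{i:\hat p_{s,i}>0}\ell_s(y_s^i)$ when $\eta_s=\infty$). AdaHedge with abstention (Algorithm 2): in round $t$ obtain $\hat{\mathbf p}_t$ from AdaHedge, set $\hat y_t=\sum_i\hat p_{t,i}y_t^i$, $y_t^\star=\mathrm{sign}(\hat y_t)$, $b_t=1-|\hat y_t|$; predict $y'_t=y_t^\star$ with probability $1-b_t$ and abstain with probability $b_t$; then feed the expert losses $\ell_t(y_t^i)$ to AdaHedge. The quantity $(1-b_t)\ell_t(y_t^\star)+b_tc_t$ is the learner's expected loss in round $t$. *)

(* Defs.v *)
From HB Require Import structures.
From mathcomp Require Import all_boot all_order all_algebra.
From mathcomp Require Import all_classical all_reals all_analysis.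
Set Implicit Arguments.
Unset Strict Implicit.
Unset Printing Implicit Defensive.
Import Order.TTheory GRing.Theory Num.Theory.
Local Open Scope ring_scope.

(* Rounds are indexed 0,1,...,T-1 (round t here = round t+1 of the paper).
   y t : label in {-1,1}; ye t i : prediction of expert i in [-1,1];
   c t : abstention cost. *)

Section AdaHedge.
Variables (R : realType) (d : nat).

Definition lossf (yt yp : R) : R := (1 - yt * yp) / 2.

Definition eloss (y : nat -> R) (ye : nat -> 'I_d -> R) (t : nat) (i : 'I_d) : R :=
  lossf (y t) (ye t i).

Definition cumL (y : nat -> R) (ye : nat -> 'I_d -> R) (t : nat) (i : 'I_d) : R :=
  \sum_(s < t) eloss y ye s i.

(* learning rate eta = ln d / Delta (used only when Delta <> 0) *)
Definition eta_of (Dl : R) : R := ln (d%:R) / Dl.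

Definition ah_weights (Dl : R) (L : 'I_d -> R) (i : 'I_d) : R :=
  if Dl == 0 then
    (if [forall j, L i <= L j]
     then (#|[set k | [forall j, L k <= L j]]|%:R)^-1 else 0)
  else expR (- eta_of Dl * L i) / \sum_(j < d) expR (- eta_of Dl * L j).

Definition hedge_loss (p l : 'I_d -> R) : R := \sum_(i < d) p i * l i.

(* mix loss m = -1/eta ln sum_i p_i e^{-eta l_i};
   for eta = infinity (Delta = 0): min over {i | p_i > 0} of l_i *)
Definition mix_loss (Dl : R) (p l : 'I_d -> R) : R :=
  if Dl == 0 then
    \big[Num.min/(if [pick i | 0 < p i] is Some i0 then l i0 else 0)]_(i | 0 < p i) l i
  else - (eta_of Dl)^-1 * ln (\sum_(i < d) p i * expR (- eta_of Dl * l i)).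

Fixpoint ah_Delta (y : nat -> R) (ye : nat -> 'I_d -> R) (t : nat) : R :=
  match t with
  | 0 => 0
  | s.+1 =>
      let D := ah_Delta y ye s in
      let p := ah_weights D (cumL y ye s) in
      D + (hedge_loss p (eloss y ye s) - mix_loss D p (eloss y ye s))
  end.

Definition ah_p (y : nat -> R) (ye : nat -> 'I_d -> R) (t : nat) : 'I_d -> R :=
  ah_weights (ah_Delta y ye t) (cumL y ye t).

Definition yhat (y : nat -> R) (ye : nat -> 'I_d -> R) (t : nat) : R :=
  \sum_(i < d) ah_p y ye t i * ye t i.

Definition ystar y ye t : R := Num.sg (yhat y ye t).

Definition bprob y ye t : R := 1 - `|yhat y ye t|.

Definition learner_exp_loss y ye (c : nat -> R) t : R :=
  (1 - bprob y ye t) * lossf (y t) (ystar y ye t) + bprob y ye t * c t.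

Definition vt y ye t : R :=
  \sum_(i < d) ah_p y ye t i * (lossf (y t) (yhat y ye t) - eloss y ye t i) ^+ 2.

End AdaHedge.

(* Main.v *)
Require Import Defs.
From HB Require Import structures.
From mathcomp Require Import all_boot all_order all_algebra.
From mathcomp Require Import all_classical all_reals all_analysis.
From mathcomp Require Import ring lra zify.
Import Order.TTheory GRing.Theory Num.Theory.
Local Open Scope ring_scope.


Section Calc.
Variable R : realType.

Lemma mvt_all (f df : R -> R) (a b : R) : a < b ->
  (forall x : R, is_derive x (1:R) f (df x)) ->
  exists2 c, a < c < b & f b - f a = df c * (b - a).
Proof.
move=> ab hd.
have [c cab ->] := MVT ab (fun x _ => hd x)
   (derivable_within_continuous (fun x _ => @ex_derive _ _ _ _ _ _ _ (hd x))).
by exists c => //; rewrite in_itv /= in cab.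
Qed.

Definition F2 (y : R) : R := (1 - expR y * (1 - y)) / 3.
Definition F1 (y : R) : R := (2 + y) / 3 - expR y * (2 - y) / 3.
Definition F0 (y : R) : R := 1 + 2 * y / 3 + y ^+ 2 / 6 - expR y * (1 - y / 3).

Lemma F2_ge0 y : 0 <= F2 y.
Proof.
rewrite /F2 divr_ge0 // subr_ge0.
have h := expR_ge1Dx (- y).
have e := expR_gt0 y.
rewrite expRN in h.
rewrite addrC in h.
have := ler_wpM2l (ltW e) h.
by rewrite mulfV ?gt_eqF // [1 - y]addrC.
Qed.

Lemma dF1 (x : R) : is_derive x (1:R) F1 (F2 x).
Proof. rewrite /F1 /F2; apply: is_derive_eq. rewrite /GRing.scale /=. by field. Qed.
Lemma dF0 (x : R) : is_derive x (1:R) F0 (F1 x).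
Proof. rewrite /F0 /F1; apply: is_derive_eq. rewrite /GRing.scale /=. by field. Qed.

Lemma F1_sign y : 0 <= y * F1 y.
Proof.
have F10 : F1 0 = 0 by rewrite /F1 expR0; field.
case: (ltgtP 0 y) => [y0|y0|<-]; last by rewrite mul0r.
- have [c _ e] := mvt_all _ _ _ _ y0 dF1.
  rewrite F10 subr0 in e; rewrite e.
  have := F2_ge0 c; nra.
- have [c _ e] := mvt_all _ _ _ _ y0 dF1.
  rewrite F10 sub0r in e.
  have -> : F1 y = F2 c * (0 - y) * -1 by rewrite -e; ring.
  have := F2_ge0 c; nra.
Qed.

Lemma F0_ge0 y : 0 <= F0 y.
Proof.
have F00 : F0 0 = 0 by rewrite /F0 expR0; field.
case: (ltgtP 0 y) => [y0|y0|<-]; last by rewrite F00.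
- have [c /andP[c0 cy] e] := mvt_all _ _ _ _ y0 dF0.
  rewrite F00 subr0 in e; rewrite e.
  have := F1_sign c. nra.
- have [c /andP[c0 cy] e] := mvt_all _ _ _ _ y0 dF0.
  rewrite F00 sub0r in e.
  have -> : F0 y = - (F1 c * (0 - y)) by rewrite -e; ring.
  have := F1_sign c. nra.
Qed.

Lemma exp_bern (y k : R) : 0 < k -> k <= 1 - y / 3 ->
  k * (expR y - 1 - y) <= y ^+ 2 / 2.
Proof.
move=> k0 ky.
have h0 := F0_ge0 y.
have h1 := expR_ge1Dx y.
have : (1 - y / 3) * (expR y - 1 - y) <= y ^+ 2 / 2.
  have -> : (1 - y / 3) * (expR y - 1 - y) = y ^+ 2 / 2 - F0 y by rewrite /F0; field.
  lra.
have : k * (expR y - 1 - y) <= (1 - y / 3) * (expR y - 1 - y).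
  apply: ler_wpM2r; lra.
move=> a b; exact: le_trans a b.
Qed.

Definition gconv (r u : R) : R := r * expR u + (1 - r) - expR (r * u).

Lemma dgconv (r x : R) : is_derive x (1:R) (gconv r) (r * expR x - r * expR (r * x)).
Proof. rewrite /gconv; apply: is_derive_eq. rewrite /GRing.scale /=. ring. Qed.

Lemma conv_exp (r u : R) : 0 <= r <= 1 -> expR (r * u) <= r * expR u + (1 - r).
Proof.
move=> /andP[r0 r1].
suff : 0 <= gconv r u by rewrite /gconv subr_ge0.
have g0 : gconv r 0 = 0 by rewrite /gconv !mulr0 expR0; ring.
case: (ltgtP 0 u) => [u0|u0|<-]; last by rewrite g0.
- have [c /andP[c0 cu] e] := mvt_all _ _ _ _ u0 (dgconv r).
  rewrite g0 subr0 in e; rewrite e.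
  have : expR (r * c) <= expR c by rewrite ler_expR; nra.
  move=> h; apply: mulr_ge0; last lra.
  rewrite -mulrBr; apply: mulr_ge0 => //; lra.
- have [c /andP[c0 cu] e] := mvt_all _ _ _ _ u0 (dgconv r).
  rewrite g0 sub0r in e.
  have -> : gconv r u = - ((r * expR c - r * expR (r * c)) * (0 - u)) by rewrite -e; ring.
  have : expR c <= expR (r * c) by rewrite ler_expR; nra.
  move=> h.
  have -> : - ((r * expR c - r * expR (r * c)) * (0 - u)) = r * (expR (r * c) - expR c) * (- u) by ring.
  apply: mulr_ge0; last lra.
  apply: mulr_ge0 => //; lra.
Qed.

End Calc.

Set Implicit Arguments.
Unset Strict Implicit.


Section PhiSec.
Variables (R : realType) (d : nat).
Hypothesis d0 : (0 < d)%N.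

Definition Phi (e : R) (L : 'I_d -> R) : R :=
  - e^-1 * ln ((d%:R)^-1 * \sum_(j < d) expR (- e * L j)).

Lemma dR_gt0 : 0 < (d%:R : R).
Proof. by rewrite ltr0n. Qed.

Lemma sum_exp_gt0 (f : 'I_d -> R) : 0 < \sum_(j < d) expR (f j).
Proof.
pose j0 : 'I_d := Ordinal d0.
apply: (lt_le_trans (expR_gt0 (f j0))).
rewrite (bigD1 j0) //= lerDl sumr_ge0 // => i _; exact: expR_ge0.
Qed.

Lemma mean_exp_gt0 (f : 'I_d -> R) : 0 < (d%:R)^-1 * \sum_(j < d) expR (f j).
Proof. by rewrite mulr_gt0 ?invr_gt0 ?dR_gt0 ?sum_exp_gt0. Qed.

Lemma ln_mulexp (a z : R) : 0 < a -> ln (a * expR z) = ln a + z.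
Proof. move=> a0; by rewrite lnM ?expRK // posrE expR_gt0. Qed.

Lemma negmul_mono (e a b : R) : 0 < e -> a <= b -> - e^-1 * b <= - e^-1 * a.
Proof.
move=> e0 ab; rewrite !mulNr lerN2; apply: ler_wpM2l => //.
by rewrite ltW // invr_gt0.
Qed.

Lemma Phi_le (e : R) L i : 0 < e -> Phi e L <= L i + ln (d%:R) / e.
Proof.
move=> e0; rewrite /Phi.
have h : ln ((d%:R)^-1 * expR (- e * L i)) <= ln ((d%:R)^-1 * \sum_(j < d) expR (- e * L j)).
  rewrite ler_ln ?posrE ?mean_exp_gt0 ?mulr_gt0 ?invr_gt0 ?dR_gt0 ?expR_gt0 //.
  rewrite ler_wpM2l ?invr_ge0 ?ler0n //.
  rewrite (bigD1 i) //= lerDl sumr_ge0 // => j _; exact: expR_ge0.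
rewrite ln_mulexp ?invr_gt0 ?dR_gt0 // lnV ?posrE ?dR_gt0 // in h.
have ie : 0 < e^-1 by rewrite invr_gt0.
have : - e^-1 * ln ((d%:R)^-1 * \sum_(j < d) expR (- e * L j)) <= - e^-1 * (- ln (d%:R) + - e * L i).
  exact: negmul_mono.
suff -> : - e^-1 * (- ln (d%:R) + - e * L i) = L i + ln (d%:R) / e by [].
by field; rewrite gt_eqF.
Qed.

Lemma Phi_ge_min (e m : R) L : 0 < e -> (forall j, m <= L j) -> m <= Phi e L.
Proof.
move=> e0 hm; rewrite /Phi.
have h : (d%:R)^-1 * \sum_(j < d) expR (- e * L j) <= expR (- e * m).
  have : \sum_(j < d) expR (- e * L j) <= \sum_(j < d) expR (- e * m).
    apply: ler_sum => j _; rewrite ler_expR; have := hm j; nra.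
  rewrite sumr_const card_ord => hs.
  rewrite -(ler_pM2l dR_gt0) mulrA mulfV ?gt_eqF ?dR_gt0 // mul1r.
  by rewrite mulr_natl.
have : ln ((d%:R)^-1 * \sum_(j < d) expR (- e * L j)) <= - e * m.
  by rewrite -[leRHS]expRK ler_ln ?posrE ?mean_exp_gt0 ?expR_gt0.
move=> h2.
have ie : 0 < e^-1 by rewrite invr_gt0.
have : - e^-1 * (- e * m) <= - e^-1 * ln ((d%:R)^-1 * \sum_(j < d) expR (- e * L j)).
  exact: negmul_mono.
suff -> : - e^-1 * (- e * m) = m by [].
by field; rewrite gt_eqF.
Qed.

Lemma Phi_shift (e c : R) L L' : 0 < e -> (forall j, L' j = c + L j) ->
  Phi e L' = c + Phi e L.
Proof.
move=> e0 hL; rewrite /Phi.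
have -> : \sum_(j < d) expR (- e * L' j) = expR (- e * c) * \sum_(j < d) expR (- e * L j).
  rewrite mulr_sumr; apply: eq_bigr => j _; rewrite hL -expRD; congr expR; ring.
rewrite mulrCA lnM ?posrE ?expR_gt0 ?mean_exp_gt0 // expRK.
by field; rewrite gt_eqF.
Qed.

Lemma Phi_mono (e1 e2 : R) L : 0 < e2 -> e2 <= e1 -> Phi e1 L <= Phi e2 L.
Proof.
move=> e20 e21.
have e10 : 0 < e1 by apply: lt_le_trans e21.
set r := e2 / e1.
have r0 : 0 <= r by rewrite divr_ge0 // ltW.
have r1 : r <= 1 by rewrite ler_pdivrMr // mul1r.
set A := (d%:R)^-1 * \sum_(j < d) expR (- e1 * L j).
have A0 : 0 < A by rewrite mean_exp_gt0.
set a := ln A.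
set B := (d%:R)^-1 * \sum_(j < d) expR (- e2 * L j).
have B0 : 0 < B by rewrite mean_exp_gt0.
have hj j : expR (- e2 * L j) <= expR (r * a) * (r * (expR (- e1 * L j) / A) + (1 - r)).
  have -> : - e2 * L j = r * a + r * (- e1 * L j - a).
    by rewrite /r; field; rewrite gt_eqF.
  rewrite expRD; apply: ler_wpM2l; first exact: expR_ge0.
  have -> : expR (- e1 * L j) / A = expR (- e1 * L j - a).
    by rewrite expRB /a lnK // posrE.
  by apply: conv_exp; rewrite r0 r1.
have hB : B <= expR (r * a).
  have hs := ler_sum (index_enum 'I_d) (fun j (_ : true) => hj j).
  have eq : \sum_(j < d) expR (r * a) * (r * (expR (- e1 * L j) / A) + (1 - r))
     = expR (r * a) * (r * ((\sum_(j < d) expR (- e1 * L j)) / A) + (1 - r) * d%:R).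
    rewrite -mulr_sumr; congr (_ * _).
    rewrite big_split /= -mulr_sumr -mulr_suml sumr_const card_ord.
    by rewrite mulr_natr.
  rewrite eq in hs.
  have sA : \sum_(j < d) expR (- e1 * L j) = d%:R * A.
    by rewrite /A mulrA mulfV ?gt_eqF ?dR_gt0 // mul1r.
  rewrite sA mulfK ?gt_eqF // in hs.
  rewrite /B -(ler_pM2l dR_gt0) mulrA mulfV ?gt_eqF ?dR_gt0 // mul1r.
  apply: (le_trans hs); rewrite le_eqVlt; apply/orP; left; apply/eqP; ring.
have hl : ln B <= r * a by rewrite -[leRHS]expRK ler_ln ?posrE ?expR_gt0.
rewrite /Phi -/A -/B -/a.
have ie : 0 < e2^-1 by rewrite invr_gt0.
have : - e2^-1 * (r * a) <= - e2^-1 * ln B.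
  exact: negmul_mono.
suff -> : - e2^-1 * (r * a) = - e1^-1 * a by [].
by rewrite /r; field; apply/andP; split; rewrite gt_eqF.
Qed.

End PhiSec.


Section Round.
Variables (R : realType) (d : nat).
Hypothesis d0 : (0 < d)%N.

Lemma bern (p l : 'I_d -> R) (e : R) :
  (forall i, 0 <= p i) -> \sum_(i < d) p i = 1 -> (forall i, 0 <= l i <= 1) -> 0 < e ->
  let h := \sum_(i < d) p i * l i in
  let dl := h + e^-1 * ln (\sum_(i < d) p i * expR (- e * l i)) in
  [/\ 0 <= dl, dl <= 1 & dl <= e * (\sum_(i < d) p i * (h - l i) ^+ 2) / 2 + e * dl / 3].
Proof.
move=> p0 p1 l01 e0 h dl.
set Z := \sum_(i < d) p i * expR (- e * l i).
set v := \sum_(i < d) p i * (h - l i) ^+ 2.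
have h1 : h <= 1.
  rewrite -p1 /h; apply: ler_sum => i _.
  have := p0 i; have := l01 i; nra.
have h0 : 0 <= h by rewrite /h sumr_ge0 // => i _; have := p0 i; have := l01 i; nra.
have Zge : expR (- e) <= Z.
  rewrite /Z -[leLHS]mul1r -p1 mulr_suml; apply: ler_sum => i _.
  apply: ler_wpM2l => //; rewrite ler_expR; have := l01 i; nra.
have Z0 : 0 < Z by apply: lt_le_trans Zge; exact: expR_gt0.
have Z1 : Z <= 1.
  rewrite /Z -p1; apply: ler_sum => i _.
  rewrite -[leRHS]mulr1; apply: ler_wpM2l => //; rewrite expR_le1; have := l01 i; nra.
set W := \sum_(i < d) p i * expR (e * (h - l i)).
have WZ : W = expR (e * h) * Z.
  rewrite /W /Z mulr_sumr; apply: eq_bigr => i _; rewrite mulrCA -expRD; congr (_ * expR _); ring.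
have W0 : 0 < W by rewrite WZ mulr_gt0 ?expR_gt0.
have lnW : ln W = e * dl.
  rewrite WZ lnM ?posrE ?expR_gt0 // expRK /dl; by field; rewrite gt_eqF.
have Sy : \sum_(i < d) p i * (e * (h - l i)) = 0.
  rewrite (eq_bigr (fun i => e * h * p i - e * (p i * l i))); last by move=> i _; ring.
  by rewrite sumrB -!mulr_sumr p1 -/h; ring.
have Sy2 : \sum_(i < d) p i * (e * (h - l i)) ^+ 2 = e ^+ 2 * v.
  rewrite /v mulr_sumr; apply: eq_bigr => i _; ring.
have W1 : 1 <= W.
  have : \sum_(i < d) p i * (1 + e * (h - l i)) <= W.
    apply: ler_sum => i _; apply: ler_wpM2l => //; exact: expR_ge1Dx.
  rewrite (eq_bigr (fun i => p i + p i * (e * (h - l i)))); last by move=> i _; ring.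
  by rewrite big_split /= Sy p1 addr0.
have dl0 : 0 <= dl.
  have : 0 <= ln W by rewrite ln_ge0.
  rewrite lnW => he; have : 0 <= e^-1 * (e * dl) by rewrite mulr_ge0 // invr_ge0 ltW.
  by rewrite mulrA mulVf ?gt_eqF // mul1r.
have lnZ : ln Z <= 0 by rewrite ln_le0.
have dl1 : dl <= 1.
  have : e^-1 * ln Z <= 0 by apply: mulr_ge0_le0 => //; rewrite invr_ge0 ltW.
  rewrite /dl; lra.
have v0 : 0 <= v by rewrite /v sumr_ge0 // => i _; rewrite mulr_ge0 // sqr_ge0.
split => //.
case: (lerP 3 e) => e3.
  have : dl <= e * dl / 3 by nra.
  have : 0 <= e * v / 2 by rewrite divr_ge0 // mulr_ge0 // ltW.
  lra.
set k := 1 - e / 3.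
have k0 : 0 < k by rewrite /k; lra.
have hk i : p i * (k * (expR (e * (h - l i)) - 1 - e * (h - l i))) <= p i * ((e * (h - l i)) ^+ 2 / 2).
  apply: ler_wpM2l => //; apply: exp_bern => //.
  have := l01 i; rewrite /k; nra.
have hs := ler_sum (index_enum 'I_d) (fun i (_ : true) => hk i).
rewrite (eq_bigr (fun i => k * (p i * expR (e * (h - l i))) - k * p i - k * (p i * (e * (h - l i))))) in hs; last by move=> i _; ring.
rewrite !sumrB -!mulr_sumr -/W p1 Sy in hs.
rewrite (eq_bigr (fun i => (p i * (e * (h - l i)) ^+ 2) / 2)) in hs; last by move=> i _; ring.
rewrite -mulr_suml Sy2 in hs.
have lW : ln W <= W - 1.
  have e1 : 1 + (W - 1) = W by ring.
  have := @le_ln1Dx R (W - 1); rewrite e1; apply; lra.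
rewrite lnW in lW.
have : k * (e * dl) <= e ^+ 2 * v / 2.
  apply: le_trans hs; rewrite (_ : k * W - k * 1 - k * 0 = k * (W - 1)); last by ring.
  apply: ler_wpM2l; [exact: ltW | exact: lW].
move=> H.
have : e * (dl - e * v / 2 - e * dl / 3) <= 0.
  have -> : e * (dl - e * v / 2 - e * dl / 3) = k * (e * dl) - e ^+ 2 * v / 2 by rewrite /k; ring.
  lra.
rewrite pmulr_rle0 //; lra.
Qed.

Lemma mix_tele (e : R) (L l : 'I_d -> R) : 0 < e ->
  - e^-1 * ln (\sum_(i < d) (expR (- e * L i) / \sum_(j < d) expR (- e * L j)) * expR (- e * l i))
  = Phi e (fun j => L j + l j) - Phi e L.
Proof.
move=> e0.
set S := \sum_(j < d) expR (- e * L j).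
have S0 : 0 < S by apply: sum_exp_gt0.
set S' := \sum_(j < d) expR (- e * (L j + l j)).
have S'0 : 0 < S' by apply: sum_exp_gt0.
have -> : \sum_(i < d) (expR (- e * L i) / S) * expR (- e * l i) = S' / S.
  rewrite /S' mulr_suml; apply: eq_bigr => i _.
  by rewrite mulrAC -expRD mulrDr.
rewrite /Phi -/S -/S'.
have dR0 : 0 < (d%:R : R)^-1 by rewrite invr_gt0 dR_gt0.
rewrite ln_div ?posrE // !lnM ?posrE //.
ring.
Qed.

Lemma w_gibbs (D : R) L i : D != 0 ->
  ah_weights D L i = expR (- eta_of d D * L i) / \sum_(j < d) expR (- eta_of d D * L j).
Proof. by move=> /negbTE H; rewrite /ah_weights H. Qed.

Lemma w_unif (L : 'I_d -> R) i : (forall j k, L j = L k) -> ah_weights 0 L i = (d%:R)^-1.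
Proof.
move=> HL; rewrite /ah_weights eqxx.
have A k : [forall j, L k <= L j] = true by apply/forallP => j; rewrite (HL k j).
rewrite A.
have -> : #|[set k | [forall j, L k <= L j]]| = d.
  by rewrite -[RHS](card_ord d); apply: eq_card => k; rewrite !inE A.
by [].
Qed.

Lemma bigmin_attain (P : pred 'I_d) (F : 'I_d -> R) i0 : P i0 ->
  exists2 i, P i & \big[Num.min/F i0]_(i | P i) F i = F i.
Proof.
move=> Pi0.
apply: (big_ind (fun v => exists2 i, P i & v = F i)).
- by exists i0.
- move=> a b [i Pi ->] [j Pj ->].
  case: (leP (F i) (F j)) => h.
  + by exists i => //; rewrite min_l.
  + by exists j => //; rewrite min_r // ltW.
- by move=> i Pi; exists i.
Qed.

Lemma bigmin_lb (P : pred 'I_d) (F : 'I_d -> R) x j : P j ->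
  \big[Num.min/x]_(i | P i) F i <= F j.
Proof. by move=> Pj; rewrite (bigD1 j) //= ge_min lexx. Qed.

Lemma mix0 (p l : 'I_d -> R) : (forall i, 0 < p i) ->
  (exists i1, mix_loss 0 p l = l i1) /\ (forall j, mix_loss 0 p l <= l j).
Proof.
move=> pp; rewrite /mix_loss eqxx.
case: pickP => [i0 Pi0|]; last by move=> /(_ (Ordinal d0)); rewrite pp.
split.
  by have [i Pi ->] := @bigmin_attain (fun i => 0 < p i) l i0 Pi0; exists i.
by move=> j; apply: bigmin_lb; rewrite pp.
Qed.

End Round.


Section Misc.
Variable R : realType.

Lemma learner_round (yt a c : R) : (yt = 1 \/ yt = -1) -> -1 <= a <= 1 -> c <= 1/2 ->
  (1 - (1 - `|a|)) * lossf yt (Num.sg a) + (1 - `|a|) * c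
  <= lossf yt a - (1 - 2 * c) * (lossf yt a * (1 - lossf yt a)).
Proof.
move=> hy /andP[a1 a2] hc; rewrite /lossf.
have H1 : 0 <= (1 - 2 * c) * (1 - a) ^+ 2 by apply: mulr_ge0; [lra | exact: sqr_ge0].
have H2 : 0 <= (1 - 2 * c) * (1 + a) ^+ 2 by apply: mulr_ge0; [lra | exact: sqr_ge0].
case: (ltgtP a 0) => ha.
- rewrite ltr0_sg // ltr0_norm //.
  case: hy => ->; nra.
- rewrite gtr0_sg // gtr0_norm //.
  case: hy => ->; nra.
- rewrite ha sgr0 normr0.
  case: hy => ->; nra.
Qed.

Lemma v_bound (d : nat) (p l : 'I_d -> R) :
  (forall i, 0 <= p i) -> \sum_(i < d) p i = 1 -> (forall i, 0 <= l i <= 1) ->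
  \sum_(i < d) p i * (\sum_(j < d) p j * l j - l i) ^+ 2
  <= (\sum_(j < d) p j * l j) * (1 - \sum_(j < d) p j * l j).
Proof.
move=> p0 p1 l01.
set h := \sum_(j < d) p j * l j.
rewrite (eq_bigr (fun i => h ^+ 2 * p i - 2 * h * (p i * l i) + p i * l i ^+ 2)); last by move=> i _; ring.
rewrite big_split /= sumrB -!mulr_sumr p1 -/h.
have : \sum_(i < d) p i * l i ^+ 2 <= h.
  apply: ler_sum => i _; apply: ler_wpM2l => //; have := l01 i; nra.
move=> H.
have -> : h ^+ 2 * 1 - 2 * h * h = - h ^+ 2 by ring.
lra.
Qed.

Lemma sq_bound (x a b : R) : 0 <= x -> 0 <= a -> 0 <= b -> x ^+ 2 <= a + b * x ->
  x <= Num.sqrt a + b.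
Proof.
move=> x0 a0 b0 H.
have s0 := sqrtr_ge0 a.
have s2 := sqr_sqrtr a0.
case: (lerP x b) => xb; first lra.
case: (lerP x (Num.sqrt a + b)) => // hxs; exfalso.
set s := Num.sqrt a in s0 s2 hxs.
have P : 0 < (x - b - s) * (x - b + s) by apply: mulr_gt0; lra.
have Q : b * b <= b * x by apply: ler_wpM2l => //; lra.
nra.
Qed.

Lemma final_ineq (N V k : R) : 0 <= N -> 0 <= V -> 0 < k ->
  2 * Num.sqrt (N * V) - k * V <= Num.min (N / k) (2 * Num.sqrt (N * V)).
Proof.
move=> N0 V0 k0.
rewrite le_min; apply/andP; split; last first.
  have : 0 <= k * V by rewrite mulr_ge0 // ltW.
  lra.
rewrite sqrtrM //.
set a := Num.sqrt N; set b := Num.sqrt V.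
have -> : N = a ^+ 2 by rewrite sqr_sqrtr.
have -> : V = b ^+ 2 by rewrite sqr_sqrtr.
rewrite ler_pdivlMr //.
have : 0 <= (a - k * b) ^+ 2 by exact: sqr_ge0.
nra.
Qed.

End Misc.


Section Main.
Variables (R : realType) (d : nat) (y : nat -> R) (ye : nat -> 'I_d -> R) (T : nat).
Hypothesis hy : forall t, (t < T)%N -> y t = 1 \/ y t = -1.
Hypothesis hye : forall t i, (t < T)%N -> -1 <= ye t i <= 1.
Hypothesis d0 : (0 < d)%N.

Local Notation Dl t := (ah_Delta y ye t).
Local Notation Lc t := (cumL y ye t).
Local Notation pw t := (ah_p y ye t).
Local Notation lo t := (eloss y ye t).
Local Notation hh t := (hedge_loss (pw t) (lo t)).
Local Notation mm t := (mix_loss (Dl t) (pw t) (lo t)).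
Local Notation vv t := (\sum_(i < d) pw t i * (hh t - lo t i) ^+ 2).
Local Notation M t := (\sum_(s < t) mm s).
Local Notation V t := (\sum_(s < t) vv s).
Local Notation N := (ln (d%:R : R)).

Lemma DlS t : Dl t.+1 = Dl t + (hh t - mm t).
Proof. by []. Qed.

Lemma LcS t j : Lc t.+1 j = Lc t j + lo t j.
Proof. by rewrite /cumL big_ord_recr. Qed.

Lemma lo01 t i : (t < T)%N -> 0 <= lo t i <= 1.
Proof.
move=> tT; rewrite /eloss /lossf.
have := hye i tT; case: (hy tT) => -> /andP[h1 h2]; apply/andP; split; lra.
Qed.

Lemma N_ge0 : 0 <= N.
Proof. by rewrite ln_ge0 // ler1n. Qed.

Lemma N_gt0 : (1 < d)%N -> 0 < N.
Proof. by move=> hd; rewrite ln_gt0 // ltr1n. Qed.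

Lemma V_ge0 t : 0 <= V t.
Proof.
rewrite sumr_ge0 // => s _; rewrite sumr_ge0 // => i _.
rewrite mulr_ge0 ?sqr_ge0 //.
rewrite /ah_p /ah_weights.
case: ifP => _; first by case: ifP => _ //; rewrite invr_ge0 ler0n.
by rewrite divr_ge0 ?expR_ge0 // sumr_ge0 // => j _; exact: expR_ge0.
Qed.

Definition Inv t :=
  [/\ 0 <= Dl t,
      Dl t = 0 -> (forall j k, Lc t j = Lc t k) /\ (forall j, M t = Lc t j),
      0 < Dl t -> (1 < d)%N /\ M t <= Phi (N / Dl t) (Lc t)
    & Dl t ^+ 2 <= N * V t + (2 * N / 3 + 1) * Dl t].


Lemma Phi_ext (e : R) (L L' : 'I_d -> R) : (forall j, L j = L' j) -> Phi e L = Phi e L'.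
Proof. by move=> H; rewrite /Phi; congr (_ * ln (_ * _)); apply: eq_bigr => j _; rewrite H. Qed.

Lemma inv_step t : (t < T)%N -> Inv t -> Inv t.+1.
Proof.
move=> tT [D0 HD0 HDp HSq].
have l01 := fun i => lo01 i tT.
have MS : M t.+1 = M t + mm t by rewrite big_ord_recr.
have VS : V t.+1 = V t + vv t by rewrite big_ord_recr.
rewrite /Inv DlS MS VS.
have N0 := N_ge0.
have V0 := V_ge0 t.
have [Dz|Dnz] := eqVneq (Dl t) 0.
-
  have [Lconst HM] := HD0 Dz.
  have pu i : pw t i = (d%:R)^-1 by rewrite /ah_p Dz; apply: w_unif.
  have pp i : 0 < pw t i by rewrite pu invr_gt0 ltr0n.
  have p1 : \sum_(i < d) pw t i = 1.
    rewrite (eq_bigr (fun _ => (d%:R)^-1)); last by move=> i _; rewrite pu.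
    by rewrite sumr_const card_ord -[_ *+ d]mulr_natr mulVf // pnatr_eq0 -lt0n.
  have [[i1 mi1] mle] := mix0 d0 (lo t) pp.
  rewrite Dz in mi1 mle *.
  set m := mix_loss 0 (pw t) (lo t) in mi1 mle *.
  have dE : \sum_(i < d) pw t i * (lo t i - m) = hh t - m.
    rewrite (eq_bigr (fun i => pw t i * lo t i - m * pw t i)); last by move=> i _; ring.
    by rewrite sumrB -mulr_sumr p1 mulr1.
  have dge0 : 0 <= hh t - m.
    rewrite -dE sumr_ge0 // => i _; apply: mulr_ge0; [exact: ltW | rewrite subr_ge0; exact: mle].
  have hh1 : hh t <= 1.
    rewrite -p1 /hedge_loss; apply: ler_sum => i _.
    have := pp i; have := l01 i; nra.
  have m0 : 0 <= m by rewrite mi1; case/andP: (l01 i1).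
  have [dz|dnz] := eqVneq (hh t - m) 0.
  + have leq i : lo t i = m.
      have := dz; rewrite -dE => /psumr_eq0P H.
      have ge : forall j : 'I_d, true -> 0 <= pw t j * (lo t j - m).
        by move=> j _; apply: mulr_ge0; [exact: ltW | rewrite subr_ge0].
      have H' := H ge i isT.
      by move/eqP: H'; rewrite mulf_eq0 (gt_eqF (pp i)) /= subr_eq0 => /eqP.
    rewrite dz addr0; split => //.
    * move=> _; split.
        by move=> j k; rewrite !LcS (Lconst j k) !leq.
      by move=> j; rewrite LcS (HM j) leq.
    * by rewrite ltxx.
    * rewrite expr2 mul0r mulr0 addr0; apply: mulr_ge0 => //.
      by rewrite addr_ge0 // sumr_ge0 // => i _; rewrite mulr_ge0 ?sqr_ge0 // ltW.
  + have dpos : 0 < hh t - m by rewrite lt_def dnz dge0.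
    rewrite add0r; split.
    * exact: ltW.
    * by move=> H; move: dnz; rewrite H eqxx.
    * move=> _.
      have hd : (1 < d)%N.
        have [i2 hi2] : exists i2, lo t i2 != m.
          apply/existsP; apply: contraT; rewrite negb_exists => /forallP H.
          move: dnz; rewrite -dE big1 ?eqxx // => i _.
          by move: (H i); rewrite negbK => /eqP ->; rewrite subrr mulr0.
        have ne : i2 != i1 by apply: contraNneq hi2 => ->; rewrite mi1.
        have := ltn_ord i2; have := ltn_ord i1.
        move: ne; rewrite -(inj_eq val_inj) /=; lia.
      split => //.
      have e0 : 0 < N / (hh t - m) by rewrite divr_gt0 // N_gt0.
      pose j0 : 'I_d := Ordinal d0.
      rewrite (Phi_shift d0 (c := Lc t j0) (L := lo t)) //; last by move=> j; rewrite LcS (Lconst j j0).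
      rewrite (HM j0) lerD2l; exact: (Phi_ge_min d0)...
    * have vv0 : 0 <= vv t by rewrite sumr_ge0 // => i _; rewrite mulr_ge0 ?sqr_ge0 // ltW.
      have d1 : hh t - m <= 1 by lra.
      have : (hh t - m) ^+ 2 <= hh t - m by rewrite expr2; nra.
      have : 0 <= N * (V t + vv t) by rewrite mulr_ge0 // addr_ge0.
      have : 0 <= N * (hh t - m) by rewrite mulr_ge0 // ltW.
      lra.
- have Dpos : 0 < Dl t by rewrite lt_def Dnz D0.
  have [hd HMt] := HDp Dpos.
  have Np := N_gt0 hd.
  set e := N / Dl t.
  have e0 : 0 < e by rewrite divr_gt0.
  have pg i : pw t i = expR (- e * Lc t i) / \sum_(j < d) expR (- e * Lc t j).
    by rewrite /ah_p (w_gibbs _ _ Dnz).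
  have S0 := sum_exp_gt0 d0 (fun j => - e * Lc t j).
  have p0 i : 0 <= pw t i by rewrite pg divr_ge0 ?expR_ge0 // ltW.
  have p1 : \sum_(i < d) pw t i = 1.
    by rewrite (eq_bigr _ (fun i _ => pg i)) -mulr_suml mulfV // gt_eqF.
  have mmE : mm t = - e^-1 * ln (\sum_(i < d) pw t i * expR (- e * lo t i)).
    by rewrite /mix_loss (negbTE Dnz).
  set dl := hh t - mm t.
  have dd : dl = \sum_(i < d) pw t i * lo t i + e^-1 * ln (\sum_(i < d) pw t i * expR (- e * lo t i)).
    by rewrite /dl mmE /hedge_loss; ring.
  have := bern p0 p1 l01 e0; rewrite /= -dd => -[b0 b1 b2].
  have dlpos : 0 < Dl t + dl by lra.
  split.
  + exact: ltW.
  + by move=> H; move: dlpos; rewrite H ltxx.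
  + move=> _; split => //.
    have tele : mm t = Phi e (fun j => Lc t j + lo t j) - Phi e (Lc t).
      rewrite mmE (eq_bigr _ (fun i _ => congr1 (fun x => x * expR (- e * lo t i)) (pg i))).
      exact: mix_tele.
    have e20 : 0 < N / (Dl t + dl) by rewrite divr_gt0.
    have e2e : N / (Dl t + dl) <= e.
      rewrite /e ler_pM2l // lef_pV2 ?posrE //; lra.
    apply: (le_trans (y := Phi e (Lc t.+1))); last exact: Phi_mono.
    rewrite (@Phi_ext e (Lc t.+1) (fun j => Lc t j + lo t j)); last by move=> j; rewrite LcS.
    rewrite tele; lra.
  + have De : Dl t * e = N by rewrite /e mulrC divfK // gt_eqF.
    have K2 : 2 * Dl t * dl <= N * vv t + 2 * N * dl / 3.
      have -> : N * vv t + 2 * N * dl / 3 = Dl t * (e * vv t + 2 * e * dl / 3) by rewrite -De; ring.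
      have -> : 2 * Dl t * dl = Dl t * (2 * dl) by ring.
      apply: ler_wpM2l => //.
      rewrite /hedge_loss in b2 *; lra.
    have sq : dl ^+ 2 <= dl by rewrite expr2; nra.
    nra.
Qed.


Lemma inv_all t : (t <= T)%N -> Inv t.
Proof.
elim: t => [_|t IH tT].
  have L0 j : Lc 0 j = 0 by rewrite /cumL big_ord0.
  rewrite /Inv big_ord0 big_ord0 /=; split => //.
  - by move=> _; split => [j k|j]; rewrite !L0.
  - by rewrite ltxx.
  - by rewrite expr2 !mulr0 addr0.
exact: inv_step tT (IH (ltnW tT)).
Qed.

Lemma hsum t : \sum_(s < t) hh s = M t + Dl t.
Proof.
elim: t => [|t IH]; first by rewrite !big_ord0 addr0.
rewrite !big_ord_recr IH DlS /=. set A := \sum_(s < t) mm s. set D := Dl t. set a := hh t. set b := mm t. Show. lra.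
Qed.

Lemma weights_ok t : Inv t -> (forall i, 0 <= pw t i) /\ \sum_(i < d) pw t i = 1.
Proof.
move=> [D0 HD0 HDp HSq].
have [Dz|Dnz] := eqVneq (Dl t) 0.
- have [Lconst HM] := HD0 Dz.
  have pu i : pw t i = (d%:R)^-1 by rewrite /ah_p Dz; apply: w_unif.
  split; first by move=> i; rewrite pu invr_ge0 ler0n.
  rewrite (eq_bigr (fun _ => (d%:R)^-1)); last by move=> i _; rewrite pu.
  by rewrite sumr_const card_ord -[_ *+ d]mulr_natr mulVf // pnatr_eq0 -lt0n.
- set e := N / Dl t.
  have pg i : pw t i = expR (- e * Lc t i) / \sum_(j < d) expR (- e * Lc t j).
    by rewrite /ah_p (w_gibbs _ _ Dnz).
  have S0 := sum_exp_gt0 d0 (fun j => - e * Lc t j).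
  split; first by move=> i; rewrite pg divr_ge0 ?expR_ge0 // ltW.
  by rewrite (eq_bigr _ (fun i _ => pg i)) -mulr_suml mulfV // gt_eqF.
Qed.

Lemma main_sec (c : nat -> R) (i : 'I_d) :
  \big[Num.max/0]_(t < T) c t < 1 / 2 ->
    \sum_(t < T) learner_exp_loss y ye c t
    <= \sum_(t < T) eloss y ye t i
       + Num.min (ln (d%:R) / (1 - 2 * \big[Num.max/0]_(t < T) c t))
                 (2 * Num.sqrt (ln (d%:R) * \sum_(t < T) vt y ye t))
       + 4 / 3 * ln (d%:R) + 2.
Proof.
move=> hcm.
set cm := \big[Num.max/0]_(t < T) c t in hcm *.
set K := 1 - 2 * cm.
have K0 : 0 < K by rewrite /K; lra.
have cle t : (t < T)%N -> c t <= cm.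
  move=> tT; rewrite /cm (bigD1 (Ordinal tT)) //= le_max lexx //.
have round t : (t < T)%N ->
   learner_exp_loss y ye c t <= hh t - K * vv t /\ vt y ye t = vv t.
  move=> tT.
  have [p0 p1] := weights_ok (inv_all (ltnW tT)).
  have l01 := fun i => lo01 i tT.
  have lh : lossf (y t) (yhat y ye t) = hh t.
    rewrite /lossf /yhat /hedge_loss /eloss /lossf.
    rewrite [RHS](eq_bigr (fun i => (pw t i - y t * (pw t i * ye t i)) / 2)); last by move=> j _; ring.
    by rewrite -mulr_suml sumrB p1 -mulr_sumr.
  have ya : -1 <= yhat y ye t <= 1.
    apply/andP; split.
    - rewrite -[X in X <= _]mulN1r -p1 mulr_sumr /yhat; apply: ler_sum => j _.
      have := hye j tT; have := p0 j; nra.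
    - rewrite -p1 /yhat; apply: ler_sum => j _.
      have := hye j tT; have := p0 j; nra.
  split; last by rewrite /vt lh.
  have H := learner_round (hy tT) ya (le_trans (cle t tT) (ltW hcm)).
  rewrite lh in H.
  rewrite /learner_exp_loss /bprob /ystar.
  apply: (le_trans H).
  have vb := v_bound p0 p1 l01.
  have v0 : 0 <= vv t by rewrite sumr_ge0 // => j _; rewrite mulr_ge0 ?sqr_ge0.
  have c1 : K <= 1 - 2 * c t by have := cle t tT; rewrite /K; lra.
  rewrite /hedge_loss in vb v0 *.
  nra.
have sumv : \sum_(t < T) vt y ye t = V T.
  by apply: eq_bigr => t _; case: (round t (ltn_ord t)).
have suml : \sum_(t < T) learner_exp_loss y ye c t <= \sum_(t < T) hh t - K * V T.
  rewrite mulr_sumr -sumrB; apply: ler_sum => t _; case: (round t (ltn_ord t)) => //.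
have [D0 HD0 HDp HSq] := inv_all (leqnn T).
have hT : \sum_(t < T) hh t <= Lc T i + 2 * Dl T.
  rewrite hsum.
  have [Dz|Dnz] := eqVneq (Dl T) 0.
    by have [_ HM] := HD0 Dz; rewrite (HM i) Dz; lra.
  have Dpos : 0 < Dl T by rewrite lt_def Dnz D0.
  have [hd HMt] := HDp Dpos.
  have Np := N_gt0 hd.
  have := Phi_le d0 (Lc T) i (divr_gt0 Np Dpos).
  have -> : N / (N / Dl T) = Dl T by field; rewrite !gt_eqF.
  lra.
have N0 := N_ge0.
have V0 := V_ge0 T.
have DT : Dl T <= Num.sqrt (N * V T) + (2 * N / 3 + 1).
  apply: sq_bound => //; first exact: mulr_ge0.
  have : 0 <= 2 * N / 3 by rewrite divr_ge0 // mulr_ge0.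
  lra.
have F := final_ineq N0 V0 K0.
rewrite sumv -/K.
have LcE : Lc T i = \sum_(t < T) eloss y ye t i by [].
rewrite -LcE.
lra.
Qed.

End Main.

Unset Implicit Arguments.
Set Strict Implicit.

Theorem mainTheorem10 (R : realType) (d T : nat)
  (y : nat -> R) (ye : nat -> 'I_d -> R) (c : nat -> R) :
  (forall t, (t < T)%N -> y t = 1 \/ y t = -1) ->
  (forall t i, (t < T)%N -> -1 <= ye t i <= 1) ->
  (forall t, (t < T)%N -> 0 <= c t) ->
  \big[Num.max/0]_(t < T) c t < 1 / 2 ->
  forall i : 'I_d,
    \sum_(t < T) learner_exp_loss y ye c t
    <= \sum_(t < T) eloss y ye t i
       + Num.min (ln (d%:R) / (1 - 2 * \big[Num.max/0]_(t < T) c t))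
                 (2 * Num.sqrt (ln (d%:R) * \sum_(t < T) vt y ye t))
       + 4 / 3 * ln (d%:R) + 2.
Proof.
move=> hy hye _ hcm i.
have d0 : (0 < d)%N by apply: leq_ltn_trans (ltn_ord i).
exact: (main_sec hy hye d0 i hcm).
Qed.
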